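(* Let $Z\subseteq\Sigma^{\mathbb Z}$ be a sofic shift, $f:\mathbb R^n\times Z\to\mathbb R^n$, $(C_1,\dots,C_K)$ a graph-induced covering of $Z$ with presentation $\mathcal G=(S,E)$, $S=\{s_1,\dots,s_K\}$, and let $W:\mathbb R^n\times\{1,\dots,K\}\to\mathbb R$ be a $\mathcal G$-based Lyapunov function for the system $x(k+1)=f(x(k),\sigma^k(\bar z))$. Then the functions $\mathcal V_{\min},\mathcal V_{\max}:\mathbb R^n\times Z\to\mathbb R$, $$\mathcal V_{\min}(x,\bar z)=\min_{j:\ \bar z\in C_j}W(x,j),\qquad \mathcal V_{\max}(x,\bar z)=\max_{j:\ \bar z\in C_j}W(x,j),$$ are both sequence-dependent Lyapunov functions for this system.
   Context: $\Sigma$ nonempty countable alphabet; $\Sigma^{\mathbb Z}$ bi-infinite sequences $\bar z=(z_k)_{k\in\mathbb Z}$; $\sigma(\bar z)_k=z_{k+1}$. A labeled graph is $\mathcal G=(S,E)$, $S$ finite, $E\subseteq S\times S\times\Sigma$; standing assumption: every node has at least one incoming and one outgoing edge. A bi-infinite walk labeled by $\bar z$ is $(e_k)_{k\in\mathbb Z}$, $e_k=(s_k,s_{k+1},z_k)\in E$, starting at $s_0$. $\mathcal Z(\mathcal G)$ / $\mathcal Z(\mathcal G,s)$: labels of all bi-infinite walks / those starting at $s$. Sofic shift: a set $\mathcal Z(\mathcal G)$. Graph-induced covering of $Z$ with presentation $\mathcal G$: a family $(C_1,\dots,C_K)$ with $\mathcal G$ having nodes $s_1,\dots,s_K$, $\mathcal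 Z(\mathcal G)=Z$, $C_j=\mathcal Z(\mathcal G,s_j)$. $\mathcal K_\infty$: continuous strictly increasing unbounded $\alpha:\mathbb R_{\ge0}\to\mathbb R_{\ge0}$ with $\alpha(0)=0$. A $\mathcal G$-based Lyapunov function is $W:\mathbb R^n\times\{1,\dots,K\}\to\mathbb R$ such that there exist $\alpha_1,\alpha_2\in\mathcal K_\infty$, $\gamma\in[0,1)$ with $\alpha_1(|x|)\le W(x,j)\le\alpha_2(|x|)$ for all $x,j$, and $W(f(x,\bar z),l)\le\gamma W(x,j)$ for all $x\in\mathbb R^n$, all edges $(s_j,s_l,i)\in E$ and all $\bar z\in C_j$ with $z_0=i$ and $\sigma(\bar z)\in C_l$. A sequence-dependent Lyapunov function is $\mathcal V:\mathbb R^n\times Z\to\mathbb R$ such that there exist $\alpha_1,\alpha_2\in\mathcal K_\infty$, $\gamma\in[0,1)$ with $\alpha_1(|x|)\le\mathcal V(x,\bar z)\le\alpha_2(|x|)$ and $\mathcal V(f(x,\bar z),\sigma(\bar z))\le\gamma\mathcal V(x,\bar z)$ for all $x\in\mathbb R^n,\bar z\in Z$. *)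

(* Defs.v *)
From mathcomp Require Import all_boot all_order all_algebra.
From mathcomp Require Import all_classical all_reals all_analysis.
Set Implicit Arguments. Unset Strict Implicit. Unset Printing Implicit Defensive.
Import Order.TTheory GRing.Theory Num.Theory.
Import numFieldNormedType.Exports.
Local Open Scope classical_set_scope.
Local Open Scope ring_scope.

Definition enorm {R : realType} {n : nat} (x : 'rV[R]_n) : R :=
  Num.sqrt (\sum_(i < n) x ord0 i ^+ 2).

(* Class K_infinity, for functions defined on R_{>=0} (values off R_{>=0} irrelevant). *)
Definition Kinf {R : realType} (a : R -> R) : Prop :=
  {within [set x : R | 0 <= x], continuous a} /\ a 0 = 0 /\
  (forall x, 0 <= x -> 0 <= a x) /\
  (forall x y, 0 <= x -> x < y -> a x < a y) /\
  (forall M, exists x, 0 <= x /\ M <= a x).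

Definition shift {Sigma : Type} (z : int -> Sigma) : int -> Sigma :=
  fun k => z (k + 1).

(* A labeled graph with node set S = 'I_K (node j is s_{j+1}) and edge
   relation E i l a  <->  (s_i, s_l, a) \in E. *)
Definition graph_ok {Sigma : Type} {K : nat} (E : 'I_K -> 'I_K -> Sigma -> Prop) :=
  forall j, (exists i a, E i j a) /\ (exists l a, E j l a).

Definition walk {Sigma : Type} {K : nat} (E : 'I_K -> 'I_K -> Sigma -> Prop)
  (z : int -> Sigma) (s : int -> 'I_K) : Prop :=
  forall k, E (s k) (s (k + 1)) (z k).

Definition ZG {Sigma : Type} {K : nat} (E : 'I_K -> 'I_K -> Sigma -> Prop)
  : set (int -> Sigma) := [set z | exists s, walk E z s].

Definition ZG_at {Sigma : Type} {K : nat} (E : 'I_K -> 'I_K -> Sigma -> Prop)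
  (j : 'I_K) : set (int -> Sigma) := [set z | exists s, walk E z s /\ s 0 = j].

Definition graph_induced_covering {Sigma : Type} {K : nat}
  (E : 'I_K -> 'I_K -> Sigma -> Prop) (Z : set (int -> Sigma))
  (C : 'I_K -> set (int -> Sigma)) : Prop :=
  ZG E = Z /\ forall j, C j = ZG_at E j.

Definition G_Lyapunov {R : realType} {Sigma : Type} {n K : nat}
  (f : 'rV[R]_n -> (int -> Sigma) -> 'rV[R]_n)
  (E : 'I_K -> 'I_K -> Sigma -> Prop) (C : 'I_K -> set (int -> Sigma))
  (W : 'rV[R]_n -> 'I_K -> R) : Prop :=
  exists a1 a2 : R -> R, exists g : R,
    Kinf a1 /\ Kinf a2 /\ 0 <= g /\ g < 1 /\
    (forall x j, a1 (enorm x) <= W x j /\ W x j <= a2 (enorm x)) /\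
    (forall x j l i z, E j l i -> C j z -> z 0 = i -> C l (shift z) ->
       W (f x z) l <= g * W x j).

Definition seq_Lyapunov {R : realType} {Sigma : Type} {n : nat}
  (Z : set (int -> Sigma)) (f : 'rV[R]_n -> (int -> Sigma) -> 'rV[R]_n)
  (V : 'rV[R]_n -> (int -> Sigma) -> R) : Prop :=
  exists a1 a2 : R -> R, exists g : R,
    Kinf a1 /\ Kinf a2 /\ 0 <= g /\ g < 1 /\
    (forall x z, Z z -> a1 (enorm x) <= V x z /\ V x z <= a2 (enorm x)) /\
    (forall x z, Z z -> V (f x z) (shift z) <= g * V x z).

(* Minimum / maximum of a finite nonempty list (value 0 on the empty list,
   which never occurs for z \in Z). *)
Definition listmin {R : realType} (s : seq R) : R :=
  match s with [::] => 0 | a :: s' => foldr Num.min a s' end.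
Definition listmax {R : realType} (s : seq R) : R :=
  match s with [::] => 0 | a :: s' => foldr Num.max a s' end.

Definition active_vals {R : realType} {Sigma : Type} {n K : nat}
  (C : 'I_K -> set (int -> Sigma)) (W : 'rV[R]_n -> 'I_K -> R)
  (x : 'rV[R]_n) (z : int -> Sigma) : seq R :=
  [seq W x j | j <- [seq j <- enum 'I_K | `[< C j z >]]].

Definition Vmin {R : realType} {Sigma : Type} {n K : nat}
  (C : 'I_K -> set (int -> Sigma)) (W : 'rV[R]_n -> 'I_K -> R)
  (x : 'rV[R]_n) (z : int -> Sigma) : R := listmin (active_vals C W x z).
Definition Vmax {R : realType} {Sigma : Type} {n K : nat}
  (C : 'I_K -> set (int -> Sigma)) (W : 'rV[R]_n -> 'I_K -> R)
  (x : 'rV[R]_n) (z : int -> Sigma) : R := listmax (active_vals C W x z).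

(* Main.v *)
Require Import Defs.
From mathcomp Require Import all_boot all_order all_algebra.
From mathcomp Require Import all_classical all_reals all_analysis.
Import Order.TTheory GRing.Theory Num.Theory.
Local Open Scope classical_set_scope.
Local Open Scope ring_scope.

Section Aux.
Variable R : realType.

Lemma foldr_min_mem (a : R) s : foldr Num.min a s \in a :: s.
Proof.
elim: s => [|b s IH] /=; first by rewrite inE.
rewrite /Num.min; case: ifP => _; first by rewrite !inE eqxx orbT.
move: IH; rewrite !inE => /orP[->|->]; by rewrite ?orbT.
Qed.

Lemma foldr_max_mem (a : R) s : foldr Num.max a s \in a :: s.
Proof.
elim: s => [|b s IH] /=; first by rewrite inE.
rewrite /Num.max; case: ifP => _; last by rewrite !inE eqxx orbT.
move: IH; rewrite !inE => /orP[->|->]; by rewrite ?orbT.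
Qed.

Lemma foldr_min_le (a : R) s y : y \in a :: s -> foldr Num.min a s <= y.
Proof.
elim: s y => [|b s IH] y /=; first by rewrite inE => /eqP ->.
rewrite !inE => /or3P[/eqP->|/eqP->|Hy].
- by rewrite ge_min (IH a) ?orbT // inE eqxx.
- by rewrite ge_min lexx.
- by rewrite ge_min (IH y) ?orbT // inE Hy orbT.
Qed.

Lemma foldr_max_ge (a : R) s y : y \in a :: s -> y <= foldr Num.max a s.
Proof.
elim: s y => [|b s IH] y /=; first by rewrite inE => /eqP ->.
rewrite !inE => /or3P[/eqP->|/eqP->|Hy].
- by rewrite le_max (IH a) ?orbT // inE eqxx.
- by rewrite le_max lexx.
- by rewrite le_max (IH y) ?orbT // inE Hy orbT.
Qed.

Lemma listmin_mem (s : seq R) : s != [::] -> listmin s \in s.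
Proof. by case: s => // a s _; apply: foldr_min_mem. Qed.
Lemma listmax_mem (s : seq R) : s != [::] -> listmax s \in s.
Proof. by case: s => // a s _; apply: foldr_max_mem. Qed.
Lemma listmin_le (s : seq R) y : y \in s -> listmin s <= y.
Proof. by case: s => // a s; apply: foldr_min_le. Qed.
Lemma listmax_ge (s : seq R) y : y \in s -> y <= listmax s.
Proof. by case: s => // a s; apply: foldr_max_ge. Qed.
End Aux.
Arguments listmin_mem {R s}.
Arguments listmax_mem {R s}.
Arguments listmin_le {R s y}.
Arguments listmax_ge {R s y}.

Section Aux2.
Variables (R : realType) (Sigma : Type) (n K : nat).
Variables (C : 'I_K -> set (int -> Sigma)) (W : 'rV[R]_n -> 'I_K -> R).

Lemma active_mem x z j : C j z -> W x j \in active_vals C W x z.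
Proof.
move=> Hj; apply: map_f; rewrite mem_filter mem_enum andbT.
by apply/asboolP.
Qed.

Lemma active_inv x z y : y \in active_vals C W x z -> exists j, C j z /\ y = W x j.
Proof.
move=> /mapP[j]; rewrite mem_filter => /andP[/asboolP Hj _] ->.
by exists j.
Qed.
End Aux2.
Arguments active_mem {R Sigma n K C W} x {z j}.
Arguments active_inv {R Sigma n K C W x z y}.

Theorem mainTheorem5 (R : realType) (Sigma : countType) (hSigma : inhabited Sigma)
  (n K : nat) (E : 'I_K -> 'I_K -> Sigma -> Prop) (hE : graph_ok E)
  (Z : set (int -> Sigma)) (f : 'rV[R]_n -> (int -> Sigma) -> 'rV[R]_n)
  (C : 'I_K -> set (int -> Sigma)) (W : 'rV[R]_n -> 'I_K -> R) :
  graph_induced_covering E Z C ->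
  G_Lyapunov f E C W ->
  seq_Lyapunov Z f (Vmin C W) /\ seq_Lyapunov Z f (Vmax C W).
Proof.
move=> [HZ HC] [a1 [a2 [g [Ha1 [Ha2 [g0 [g1 [Hb Hd]]]]]]]].
have Hnz : forall x z, Z z -> active_vals C W x z != [::].
  move=> x z; rewrite -HZ => -[s Hs].
  have Hc : C (s 0) z by rewrite HC; exists s.
  by apply/eqP => E0; move: (active_mem (W:=W) x Hc); rewrite E0.
have Hfwd : forall j z, C j z -> exists l, E j l (z 0) /\ C l (Defs.shift z).
  move=> j z; rewrite HC => -[s [Hs Hs0]].
  exists (s 1); split; first by move: (Hs 0); rewrite Hs0 add0r.
  rewrite HC; exists (fun k => s (k + 1)); split => // k.
have Hbwd : forall l z, C l (Defs.shift z) -> exists j, E j l (z 0) /\ C j z.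
  move=> l z; rewrite HC => -[s [Hs Hs0]].
  exists (s (-1)); split.
    by move: (Hs (-1)); rewrite /Defs.shift addNr Hs0.
  rewrite HC; exists (fun k => s (k - 1)); split => // k.
  by rewrite addrK; move: (Hs (k - 1)); rewrite /Defs.shift subrK.
split.
- exists a1, a2, g; do 4 (split => //); split.
    move=> x z Zz; rewrite /Vmin.
    have [j' Cj'] : exists j, C j z.
      move: Zz; rewrite -HZ => -[s Hs]; exists (s 0).
      by rewrite HC; exists s.
    move: (listmin_mem (Hnz x z Zz)) => /active_inv[j [_ Hj]].
    rewrite Hj; split; first by case: (Hb x j).
    have H1 := listmin_le (active_mem (W:=W) x Cj').
    rewrite -Hj; exact: (le_trans H1 (proj2 (Hb x j'))).
  move=> x z Zz.
  move: (listmin_mem (Hnz x z Zz)) => /active_inv[j [Cj Hj]].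
  have [l [Ejl Cl]] := Hfwd j z Cj.
  rewrite /Vmin Hj.
  have H1 := listmin_le (active_mem (W:=W) (f x z) Cl).
  exact: (le_trans H1 (Hd x j l (z 0) z Ejl Cj erefl Cl)).
- exists a1, a2, g; do 4 (split => //); split.
    move=> x z Zz.
    have [j' Cj'] : exists j, C j z.
      move: Zz; rewrite -HZ => -[s Hs]; exists (s 0).
      by rewrite HC; exists s.
    move: (listmax_mem (Hnz x z Zz)) => /active_inv[j [_ Hj]].
    rewrite /Vmax Hj; split; last by case: (Hb x j).
    have H1 := listmax_ge (active_mem (W:=W) x Cj').
    rewrite -Hj; exact: (le_trans (proj1 (Hb x j')) H1).
  move=> x z Zz.
  have Zs : Z (Defs.shift z).
    move: Zz; rewrite -HZ => -[s Hs]; exists (fun k => s (k + 1)) => k.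
    exact: Hs.
  move: (listmax_mem (Hnz (f x z) (Defs.shift z) Zs)) => /active_inv[l [Cl Hl]].
  have [j [Ejl Cj]] := Hbwd l z Cl.
  rewrite /Vmax Hl.
  have H1 := listmax_ge (active_mem (W:=W) x Cj).
  have H2 : g * W x j <= g * listmax (active_vals C W x z) by rewrite ler_wpM2l.
  exact: (le_trans (Hd x j l (z 0) z Ejl Cj erefl Cl) H2).
Qed.
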